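(* Let $B\ge 2$ and $\eta\in\mathbb{N}$. Then $\alpha_{\eta+1}\le 2B$, i.e. $\gamma_B(\eta+1)$ has at most $2B$ base-$B$ digits different from $B-1$.
   Context: Fix an integer base $B \geq 2$. Every integer $x>0$ is written uniquely as $x=\sum_{i=0}^{L(x)-1} x_i B^i$ with digits $0 \le x_i \le B-1$ and $x_{L(x)-1}\neq 0$. Define $\mathcal{H}_B(x)=\sum_{i=0}^{L(x)-1} x_i^2$, $\mathcal{H}_B(0)=0$, $\mathcal{H}_B^0(x)=x$, $\mathcal{H}_B^{n}=\mathcal{H}_B\circ\mathcal{H}_B^{n-1}$. A positive integer $x$ is happy if $\mathcal{H}_B^n(x)=1$ for some $n\in\mathbb{N}$; its height is $\eta_B(x)=\min\{\alpha\in\mathbb{N}:\mathcal{H}_B^\alpha(x)=1\}$. For $n\in\mathbb{N}$, $\gamma_B(n)$ denotes the smallest happy number $x\ge 1$ with $\eta_B(x)=n$. For each $n$, $L_n=L(\gamma_B(n))$ is the number of base-$B$ digits of $\gamma_B(n)$, $t_n$ is the number of those digits equal to $B-1$, and $\alpha_n=L_n-t_n$ is the number of digits smaller than $B-1$. *)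

(* Defs.v *)
From mathcomp Require Import all_boot.
Set Implicit Arguments. Unset Strict Implicit. Unset Printing Implicit Defensive.

(* Base-B digits of x, least significant first; [::] for x = 0.
   Fuel f >= x suffices since x %/ B < x for x > 0, B >= 2. *)
Fixpoint digits_fuel (B f x : nat) : seq nat :=
  match f with
  | 0 => [::]
  | f'.+1 => if x == 0 then [::] else (x %% B) :: digits_fuel B f' (x %/ B)
  end.

Definition digits (B x : nat) : seq nat := digits_fuel B x x.

Definition H (B x : nat) : nat := sumn [seq d ^ 2 | d <- digits B x].

Definition Hiter (B n x : nat) : nat := iter n (H B) x.

Definition happy (B x : nat) : Prop := 0 < x /\ exists n, Hiter B n x = 1.

Definition height_is (B x n : nat) : Prop :=
  happy B x /\ Hiter B n x = 1 /\ forall m, m < n -> Hiter B m x <> 1.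

Definition is_gamma (B n x : nat) : Prop :=
  height_is B x n /\ forall y, 0 < y -> height_is B y n -> x <= y.

Definition alpha (B x : nat) : nat := count (fun d => d < B.-1) (digits B x).

(* Main.v *)
From Stdlib Require Import ZArith Lia.
Require Import Defs.
From mathcomp Require Import all_boot zify.

Module FS.
Local Open Scope Z_scope.

Definition s4 (n : Z) := exists a b c d : Z, n = a*a+b*b+c*c+d*d.

Lemma s4_mul a b : s4 a -> s4 b -> s4 (a*b).
Proof.
intros [a1 [a2 [a3 [a4 ->]]]] [b1 [b2 [b3 [b4 ->]]]].
exists (a1*b1+a2*b2+a3*b3+a4*b4), (a1*b2-a2*b1+a3*b4-a4*b3),
  (a1*b3-a2*b4-a3*b1+a4*b2), (a1*b4+a2*b3-a3*b2-a4*b1). ring.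
Qed.

Lemma red (x m : Z) : 1 < m -> exists q y, x = y + m*q /\ - m < 2*y <= m.
Proof.
intros Hm. set (c := (m-1)/2).
pose proof (Z.div_mod (m-1) 2 ltac:(lia)).
pose proof (Z.mod_pos_bound (m-1) 2 ltac:(lia)).
pose proof (Z.div_mod (x+c) m ltac:(lia)).
pose proof (Z.mod_pos_bound (x+c) m ltac:(lia)).
exists ((x+c)/m), (x - m*((x+c)/m)). fold c in H. lia.
Qed.

Lemma mul_cancel (m a b : Z) : m <> 0 -> m * a = m * b -> a = b.
Proof. intros. apply (Z.mul_reg_l a b m); auto. Qed.

Lemma step (p m : Z) : 1 < m -> m < p ->
  (forall d, 1 < d < p -> ~ (d | p)) -> s4 (m*p) ->
  exists r, 0 < r < m /\ s4 (r*p).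
Proof.
intros Hm Hmp Hp [x1 [x2 [x3 [x4 Hx]]]].
destruct (red x1 m Hm) as [q1 [y1 [-> B1]]].
destruct (red x2 m Hm) as [q2 [y2 [-> B2]]].
destruct (red x3 m Hm) as [q3 [y3 [-> B3]]].
destruct (red x4 m Hm) as [q4 [y4 [-> B4]]].
set (r := p - 2*((y1+m*q1)*q1+(y2+m*q2)*q2+(y3+m*q3)*q3+(y4+m*q4)*q4)
          + m*(q1*q1+q2*q2+q3*q3+q4*q4)).
assert (Hr : m*r = y1*y1+y2*y2+y3*y3+y4*y4).
{ unfold r. nia. }
assert (S1 : 4*(y1*y1) <= m*m) by nia.
assert (S2 : 4*(y2*y2) <= m*m) by nia.
assert (S3 : 4*(y3*y3) <= m*m) by nia.
assert (S4 : 4*(y4*y4) <= m*m) by nia.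
assert (Hr0 : 0 <= r) by nia.
assert (Hrm : r <= m) by nia.
destruct (Z.eq_dec r 0) as [E0|E0].
{ exfalso. rewrite E0 in Hr.
  assert (y1 = 0) by nia. assert (y2 = 0) by nia.
  assert (y3 = 0) by nia. assert (y4 = 0) by nia. subst y1 y2 y3 y4.
  apply (Hp m); [lia|]. exists (q1*q1+q2*q2+q3*q3+q4*q4).
  apply (mul_cancel m); [lia|]. rewrite Hx. ring. }
destruct (Z.eq_dec r m) as [Em|Em].
{ exfalso. rewrite Em in Hr.
  assert (E1 : 4*(y1*y1) = m*m) by lia.
  assert (E2 : 4*(y2*y2) = m*m) by lia.
  assert (E3 : 4*(y3*y3) = m*m) by lia.
  assert (E4 : 4*(y4*y4) = m*m) by lia.
  assert (F1 : 2*y1 = m) by nia.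
  assert (F2 : 2*y2 = m) by nia.
  assert (F3 : 2*y3 = m) by nia.
  assert (F4 : 2*y4 = m) by nia.
  apply (Hp m); [lia|].
  exists (1 + q1*q1+q1 + q2*q2+q2 + q3*q3+q3 + q4*q4+q4).
  apply (mul_cancel (4*m)); [lia|].
  replace (4*m*p) with (4*(m*p)) by ring. rewrite Hx.
  assert (y2 = y1) by lia. assert (y3 = y1) by lia. assert (y4 = y1) by lia. subst y2 y3 y4. rewrite -F1. ring. }
exists r. split; [lia|].
set (w1 := r + (q1*y1+q2*y2+q3*y3+q4*y4)).
exists w1, (q1*y2-q2*y1+q3*y4-q4*y3), (q1*y3-q2*y4-q3*y1+q4*y2),
  (q1*y4+q2*y3-q3*y2-q4*y1).
assert (Ew1 : m*w1 = y1*y1+y2*y2+y3*y3+y4*y4 + m*(q1*y1+q2*y2+q3*y3+q4*y4)).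
{ unfold w1. rewrite -Hr. ring. }
apply (mul_cancel (m*m)); [nia|].
transitivity ((m*r)*(m*p)); [ring|].
rewrite Hx Hr.
transitivity ((m*w1)*(m*w1) + (m*(q1*y2-q2*y1+q3*y4-q4*y3))*(m*(q1*y2-q2*y1+q3*y4-q4*y3))
  + (m*(q1*y3-q2*y4-q3*y1+q4*y2))*(m*(q1*y3-q2*y4-q3*y1+q4*y2))
  + (m*(q1*y4+q2*y3-q3*y2-q4*y1))*(m*(q1*y4+q2*y3-q3*y2-q4*y1))); [|ring].
rewrite Ew1. ring.
Qed.

Lemma descent (p : Z) : 1 < p -> (forall d, 1 < d < p -> ~ (d | p)) ->
  forall n : nat, forall m, 0 < m -> m <= Z.of_nat n -> m < p -> s4 (m*p) -> s4 p.
Proof.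
intros H1 Hp n. induction n as [|n IH]; intros m Hm0 Hmn Hmp Hs.
- lia.
- destruct (Z.eq_dec m 1) as [->|Hm1].
  + now rewrite Z.mul_1_l in Hs.
  + destruct (step p m ltac:(lia) Hmp Hp Hs) as [r [Hr Hs']].
    apply (IH r); lia || auto.
Qed.

End FS.


Lemma sq_inj p x x' : prime p -> 2*x <= p -> 2*x' <= p ->
  x^2 = x'^2 %[mod p] -> x = x'.
Proof.
move=> pp.
wlog le: x x' / x' <= x => [W|].
  move=> h1 h2 E; case: (leqP x' x) => h; first exact: W.
  by symmetry; apply: W => //; lia.
move=> h1 h2 /eqP E.
have p2 := prime_gt1 pp.
rewrite eqn_mod_dvd in E; last by nia.
have F: x^2 - x'^2 = (x - x') * (x + x') by nia.
rewrite F Euclid_dvdM // in E.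
case/orP: E => D.
  have : x - x' = 0.
    apply/eqP; apply: contraT => nz.
    have := dvdn_leq (_ : 0 < x - x') D; lia.
  lia.
case: (posnP (x + x')) => hz; first lia.
have := dvdn_leq hz D; lia.
Qed.

Lemma collision p : prime p ->
  exists x y, 2*x <= p /\ 2*y <= p /\ p %| x^2 + y^2 + 1.
Proof.
move=> pp; have p2 := prime_gt1 pp.
set h := p./2.
set f := fun y => (p*p - (y^2+1)) %% p.
set l1 := [seq x^2 %% p | x <- iota 0 h.+1].
set l2 := [seq f y | y <- iota 0 h.+1].
have hb : forall y, y \in iota 0 h.+1 -> 2*y <= p.
  move=> y; rewrite mem_iota /h => /andP[_ hy].
  have := odd_double_half p; rewrite -/h -addnn; case: (odd p) => /=; lia.
have u1 : uniq l1.
  rewrite map_inj_in_uniq ?iota_uniq // => a b ha hb' E.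
  exact: (@sq_inj p a b pp (hb _ ha) (hb _ hb') E).
have fK : forall y, 2*y <= p -> y^2 + 1 <= p*p by move=> y hy; nia.
have u2 : uniq l2.
  rewrite map_inj_in_uniq ?iota_uniq // => a b ha hb' E.
  apply/esym; apply: (@sq_inj p b a pp (hb _ hb') (hb _ ha)).
  have ea := fK _ (hb _ ha); have eb := fK _ (hb _ hb').
  have : (p*p - (a^2+1) + (a^2+1) + b^2) %% p = (p*p - (b^2+1) + (b^2+1) + a^2) %% p.
    rewrite /f in E; rewrite -addnA -[in RHS]addnA -modnDml E modnDml.
    congr (_ %% p). lia.
  rewrite !subnK // !modnMDl //.
have nu : ~~ uniq (l1 ++ l2).
  apply/negP => u.
  have sub : {subset l1 ++ l2 <= iota 0 p}.
    move=> z; rewrite mem_cat mem_iota => /orP[] /mapP[w _ ->]; rewrite ?/f ltn_mod leq0n /=; lia.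
  have := uniq_leq_size u sub.
  rewrite size_cat !size_map size_iota.
  have := odd_double_half p; rewrite -/h -addnn; case: (odd p) => /=; rewrite size_iota; lia.
rewrite cat_uniq u1 u2 andbT andTb negbK in nu.
move/hasP: nu => [z /mapP[y hy ->] /mapP[x hx E]].
exists x, y; split; first exact: hb.
split; first exact: hb.
have ey := fK _ (hb _ hy).
by rewrite /dvdn -addnA -modnDml -E /f modnDml subnK // modnMl.
Qed.


Lemma s4_prime p : prime p -> FS.s4 (Z.of_nat p).
Proof.
move=> pp; have p2 := prime_gt1 pp.
have [x [y [hx [hy D]]]] := collision p pp.
set m := (x^2 + y^2 + 1) %/ p.
have Em : x^2 + y^2 + 1 = m * p by rewrite divnK.
have m0 : 0 < m by nia.
have mp : m < p by nia.
apply: (FS.descent (Z.of_nat p) _ _ m (Z.of_nat m)); try lia.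
- move=> d Hd [k Hk].
  have Ep : p = Z.to_nat k * Z.to_nat d by nia.
  have : Z.to_nat d %| p by apply/dvdnP; exists (Z.to_nat k).
  move/(prime_nt_dvdP pp) => E.
  have : Z.to_nat d != 1 by apply/eqP; lia.
  move/E; lia.
- exists (Z.of_nat x), (Z.of_nat y), 1%Z, 0%Z. lia.
Qed.

Lemma s4_nat_all n : FS.s4 (Z.of_nat n).
Proof.
elim: n {-2}n (leqnn n) => [|N IH] n hn.
  have -> : n = 0 by lia. by exists 0%Z, 0%Z, 0%Z, 0%Z.
case: (leqP n 1) => h1.
  case: n hn h1 => [|[|]] // _ _; first by exists 0%Z, 0%Z, 0%Z, 0%Z.
  by exists 1%Z, 0%Z, 0%Z, 0%Z.
have pp := pdiv_prime h1.
have := pdiv_dvd n; move/dvdnP => [k Ek].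
have p2 := prime_gt1 pp.
have kn : k < n by nia.
have -> : Z.of_nat n = (Z.of_nat k * Z.of_nat (pdiv n))%Z by lia.
apply: FS.s4_mul; last exact: s4_prime.
apply: IH; lia.
Qed.

Lemma four_sq n : exists a b c d : nat, n = a^2 + b^2 + c^2 + d^2.
Proof.
have [a [b [c [d E]]]] := s4_nat_all n.
exists (Z.abs_nat a), (Z.abs_nat b), (Z.abs_nat c), (Z.abs_nat d).
apply: Nat2Z.inj.
have F : forall z : Z, Z.of_nat (Z.abs_nat z ^ 2) = (z * z)%Z.
  move=> z. have -> : Z.abs_nat z ^ 2 = Z.abs_nat z * Z.abs_nat z by rewrite expnS expn1.
  rewrite Nat2Z.inj_mul Zabs2Nat.id_abs. nia.
rewrite !Nat2Z.inj_add !F. exact: E.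
Qed.


Section D.
Variable B : nat.
Hypothesis HB : 2 <= B.

Lemma df_eq f g x : x <= f -> x <= g -> digits_fuel B f x = digits_fuel B g x.
Proof.
elim: f g x => [|f IH] [|g] x /= hf hg //.
- by have -> : x = 0 by lia.
- by have -> : x = 0 by lia.
- case: eqP => // /eqP nz; congr (_ :: _); apply: IH.
  + have := ltn_Pdiv HB (_ : 0 < x); lia.
  + have := ltn_Pdiv HB (_ : 0 < x); lia.
Qed.

Lemma digits0 : digits B 0 = [::].
Proof. by []. Qed.

Lemma digits_rec x : 0 < x -> digits B x = x %% B :: digits B (x %/ B).
Proof.
move=> x0; rewrite /digits; case: x x0 => [//|x] _ /=.
congr (_ :: _); apply: df_eq => //.
have := ltn_Pdiv HB (_ : 0 < x.+1); lia.
Qed.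

Lemma H0 : H B 0 = 0. Proof. by []. Qed.

Lemma H_rec x : 0 < x -> H B x = (x %% B)^2 + H B (x %/ B).
Proof. by move=> x0; rewrite /H digits_rec. Qed.

Lemma H_cons d v : d < B -> H B (d + B * v) = d^2 + H B v.
Proof.
move=> hd; case: (posnP (d + B * v)) => h.
  have -> : d = 0 by lia. have -> : v = 0 by nia. by rewrite muln0.
rewrite H_rec // (addnC d) (mulnC B) modnMDl modn_small // divnMDl ?divn_small ?addn0 //; lia.
Qed.

Definition dval (l : seq nat) := foldr (fun d acc => d + B * acc) 0 l.

Lemma H_val l : all (fun d => d < B) l -> H B (dval l) = sumn [seq d^2 | d <- l].
Proof.
elim: l => [|d l IH] //= /andP[hd hl]. by rewrite H_cons // IH.
Qed.

Lemma val_lt l : all (fun d => d < B) l -> dval l < B ^ size l.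
Proof.
elim: l => [|d l IH] /=; first by [].
move=> /andP[hd hl]; have := IH hl; rewrite expnS; nia.
Qed.

Lemma digits_lt_all n : forall x, x <= n -> all (fun d => d < B) (digits B x).
Proof.
elim: n => [|n IH] x hx.
  by have -> : x = 0 by lia.
case: (posnP x) => [->//|x0].
rewrite digits_rec //= ltn_mod (_ : 0 < B) ?IH //; first (have := ltn_Pdiv HB x0; lia).
lia.
Qed.

Lemma digits_lt x : all (fun d => d < B) (digits B x).
Proof. exact: (@digits_lt_all x x (leqnn x)). Qed.

Lemma val_digits_n n : forall x, x <= n -> dval (digits B x) = x.
Proof.
elim: n => [|n IH] x hx.
  by have -> : x = 0 by lia.
case: (posnP x) => [->//|x0].
rewrite digits_rec //= IH; last (have := ltn_Pdiv HB x0; lia).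
by rewrite mulnC addnC -divn_eq.
Qed.

Lemma size_lb_n n : forall x, x <= n -> 0 < x -> B ^ (size (digits B x)).-1 <= x.
Proof.
elim: n => [|n IH] x hx x0; first lia.
rewrite digits_rec //=.
case: (posnP (x %/ B)) => q0.
  by rewrite q0 digits0 /= expn0.
have := IH (x %/ B) (_ : x %/ B <= n) q0.
have := ltn_Pdiv HB x0. move=> h1 h2.
have : x %/ B <= n by lia.
move/(IH _)/(_ q0) => h3.
have e := divn_eq x B.
have sz : 0 < size (digits B (x %/ B)) by rewrite digits_rec.
rewrite -(prednK sz) expnS. nia.
Qed.

End D.


Lemma ineq j b : 2 * b + 1 <= j -> (j + 4) * b^2 < j * (b + 1)^2.
Proof.
move=> h.
have h1 : (2*b+1)*(2*b+1) <= j * (2*b+1) by apply: leq_mul.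
have -> : (b+1)^2 = b^2 + (2*b+1) by rewrite sqrnD; lia.
rewrite mulnDr mulnDl.
have : 4 * b^2 < (2*b+1)*(2*b+1) by rewrite -!mulnn; lia.
lia.
Qed.

Lemma split_sum B l : all (fun d => d < B) l ->
  sumn [seq d^2 | d <- l] = sumn [seq d^2 | d <- filter (fun d => d < B.-1) l]
    + (size l - count (fun d => d < B.-1) l) * B.-1 ^ 2.
Proof.
elim: l => [|a l IH] //= /andP[ha hl].
have cs := count_size (fun d => d < B.-1) l.
case: ifP => h /=; rewrite IH //.
  rewrite subSS; lia.
have -> : a = B.-1 by lia.
rewrite add0n subSn // mulSn; lia.
Qed.

Lemma bound_sum B s : all (fun d => d < B.-1) s ->
  sumn [seq d^2 | d <- s] <= size s * B.-2 ^ 2.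
Proof.
elim: s => [|a s IH] //= /andP[ha hs].
have := IH hs. have : a <= B.-2 by lia. move=> h1 h2.
rewrite mulSn; apply: leq_add => //. by rewrite leq_sqr.
Qed.

Lemma iterH0 B n : Hiter B n 0 = 0.
Proof. elim: n => //= n IH. by rewrite /Hiter /= in IH *; rewrite IH. Qed.

Theorem corollary2p5 (B eta x : nat) :
  2 <= B -> is_gamma B eta.+1 x -> alpha B x <= 2 * B.
Proof.
move=> HB [[[x0 _] [Hit Hmin]] Hall].
have x1 : x <> 1 by apply: (Hmin 0).
have no_smaller : forall y, 0 < y -> y <> 1 -> H B y = H B x -> x <= y.
  move=> y y0 y1 E; apply: Hall => //.
  have EI : forall k, Hiter B k.+1 y = Hiter B k.+1 x.
    by move=> k; rewrite /Hiter !iterSr E.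
  split; first by split => //; exists eta.+1; rewrite EI.
  split; first by rewrite EI.
  by case=> [|k] hk //; rewrite EI; apply: Hmin.
have Hx0 : H B x <> 0.
  move=> E; move: Hit; rewrite /Hiter iterSr E -/(Hiter B eta 0) iterH0 //.
rewrite leqNgt; apply/negP => ha.
set l := digits B x.
set k := count (fun d => d < B.-1) l.
have hk : 2 * B < k by [].
have lt := digits_lt B HB x; rewrite -/l in lt.
set S := sumn [seq d^2 | d <- filter (fun d => d < B.-1) l].
set t := size l - k.
have HxE : H B x = S + t * B.-1 ^ 2 by rewrite /H -/l (@split_sum B l lt).
have Sb : S <= k * B.-2 ^ 2.
  have := @bound_sum B _ (filter_all (fun d => d < B.-1) l).
  by rewrite size_filter.
have ks : k <= size l by apply: count_size.
set M := B.-1.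
have M0 : 0 < M ^ 2 by rewrite expn_gt0; lia.
set q := S %/ M ^ 2. set r := S %% M ^ 2.
have Sq : S = q * M ^ 2 + r by apply: divn_eq.
have rM : r < M ^ 2 by rewrite ltn_mod.
clearbody q r.
have [a [b [c [d Er]]]] := four_sq r.
have qk : q + 4 < k.
  rewrite ltnNge; apply/negP => hq.
  set bb := B.-2. have eM : M = bb + 1 by rewrite /M /bb; lia.
  have e1 : q * (bb+1)^2 <= S by rewrite -eM Sq; clear; lia.
  have hj : 2*bb+1 <= k - 4 by rewrite /bb; clear -hk HB; lia.
  have h6 := @ineq (k-4) bb hj.
  have ek : k - 4 + 4 = k by clear -hk HB; lia. rewrite ek in h6.
  have h7 : (k-4)*(bb+1)^2 <= q*(bb+1)^2 by apply: leq_mul => //; clear -hq; lia.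
  rewrite -/bb in Sb. clear -h6 h7 e1 Sb; lia.
set l' := [:: a; b; c; d] ++ nseq (q + t) M.
have lt' : all (fun d => d < B) l'.
  rewrite all_cat all_nseq /=.
  have sq : forall z, z^2 <= r -> z < B.
    move=> z hz; have : z^2 < M^2 by clear -hz rM; lia.
    rewrite ltn_sqr /M; clear -HB; lia.
  have hM : M < B by rewrite /M; clear -HB; lia.
  rewrite hM orbT !sq //; clear -Er; lia.
set y := dval B l'.
have Hy : H B y = H B x.
  rewrite /y (@H_val B HB) // HxE map_cat sumn_cat map_nseq sumn_nseq /= Sq Er -/M. clear; lia.
have szl' : size l' < size l by rewrite size_cat size_nseq /=; lia.
have ylt : y < x.
  have h1 := val_lt B HB l' lt'.
  have h2 := @size_lb_n B HB x x (leqnn x) x0. rewrite -/l in h2.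
  have : B ^ size l' <= B ^ (size l).-1 by apply: leq_pexp2l; clear -HB szl'; lia.
  rewrite -/y in h1; clear -h1 h2; lia.
case: (posnP y) => y0.
  by apply: Hx0; rewrite -Hy y0.
case: (eqVneq y 1) => y1.
  have H1 : H B 1 = 1.
    have := @H_cons B HB 1 0 HB; rewrite muln0 addn0 => ->.
    by [].
  have HB1 : H B B = 1.
    have := @H_cons B HB 0 1 (ltnW HB); rewrite muln1 add0n => ->.
    by rewrite H1.
  have Bx : B < x.
    have h2 := @size_lb_n B HB x x (leqnn x) x0. rewrite -/l in h2.
    have h3 : B ^ 1 < B ^ (size l).-1 by rewrite ltn_exp2l //; clear -ks hk HB; lia.
    rewrite expn1 in h3; clear -h2 h3; lia.
  have hB1 : B <> 1 by clear -HB; lia.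
  have hBx : H B B = H B x by rewrite HB1 -Hy y1 H1.
  have := no_smaller B (ltnW HB) hB1 hBx. clear -Bx; lia.
have y1' : y <> 1 by apply/eqP.
have := no_smaller y y0 y1' Hy. clear -ylt; lia.
Qed.
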